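(* Let $n\ge3$, let $W\subset\mathbb{H}^n$ be a real $2$-plane and $\{x,v\}$ a real orthonormal basis of $W$. Then $|\pi_x^\perp(v)|^2$ is independent of the choice of orthonormal basis $\{x,v\}$ of $W$, and it is a complete invariant for the action of $\mathrm{Sp}(n)\cdot\mathrm{Sp}(1)$ on the Grassmannian $G^{\mathbb{R}}(2,\mathbb{H}^n)$.
   Context: $\mathbb{H}^n=\mathbb{R}^{4n}$ with the standard real inner product; $\mathbb{H}x$ denotes the quaternion line through $x$ and $\pi_x^\perp$ is orthogonal projection onto $(\mathbb{H}x)^\perp$. $\mathrm{Sp}(n)$ acts by quaternion-linear isometries and $\mathrm{Sp}(1)$ by multiplication by unit quaternion scalars; $G^{\mathbb{R}}(2,\mathbb{H}^n)$ is the Grassmannian of real $2$-planes. ''Complete invariant'' means two real $2$-planes are in the same orbit iff their invariants coincide. *)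

(* Defs.v *)
From mathcomp Require Import all_boot all_order all_algebra.
Set Implicit Arguments. Unset Strict Implicit. Unset Printing Implicit Defensive.
Import Order.TTheory GRing.Theory Num.Theory.
Local Open Scope ring_scope.

Record quat (R : Type) := Quat { qre : R; qim : R; qjm : R; qkm : R }.

Section Quaternions.
Variable R : rcfType.

Definition qmul (p q : quat R) : quat R :=
  Quat (qre p * qre q - qim p * qim q - qjm p * qjm q - qkm p * qkm q)
       (qre p * qim q + qim p * qre q + qjm p * qkm q - qkm p * qjm q)
       (qre p * qjm q - qim p * qkm q + qjm p * qre q + qkm p * qim q)
       (qre p * qkm q + qim p * qjm q - qjm p * qim q + qkm p * qre q).
Definition qadd (p q : quat R) : quat R :=
  Quat (qre p + qre q) (qim p + qim q) (qjm p + qjm q) (qkm p + qkm q).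
Definition qscal (a : R) (q : quat R) : quat R :=
  Quat (a * qre q) (a * qim q) (a * qjm q) (a * qkm q).
Definition qdot (p q : quat R) : R :=
  qre p * qre q + qim p * qim q + qjm p * qjm q + qkm p * qkm q.
Definition qnorm2 (q : quat R) : R := qdot q q.
Definition q1 : quat R := Quat 1 0 0 0.
Definition qi : quat R := Quat 0 1 0 0.
Definition qj : quat R := Quat 0 0 1 0.
Definition qk : quat R := Quat 0 0 0 1.

(* H^n, with quaternion scalars acting on the left (so Hx = {q x}). *)
Definition hvec (n : nat) := 'I_n -> quat R.

Variable n : nat.
Definition vadd (x y : hvec n) : hvec n := fun i => qadd (x i) (y i).
Definition vscale (a : R) (x : hvec n) : hvec n := fun i => qscal a (x i).
Definition vsub (x y : hvec n) : hvec n := vadd x (vscale (-1) y).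
Definition lmulv (q : quat R) (x : hvec n) : hvec n := fun i => qmul q (x i).
Definition ip (x y : hvec n) : R := \sum_(i < n) qdot (x i) (y i).

(* orthogonal projection onto (Hx)^perp, x <> 0: the real vectors
   x, ix, jx, kx form an orthogonal real basis of Hx, all of norm |x|. *)
Definition piperp (x v : hvec n) : hvec n :=
  let c e := vscale (ip v (lmulv e x) / ip x x) (lmulv e x) in
  vsub v (vadd (c q1) (vadd (c qi) (vadd (c qj) (c qk)))).

Definition inv2 (x v : hvec n) : R := ip (piperp x v) (piperp x v).

Definition is_Sp (f : hvec n -> hvec n) : Prop :=
  [/\ (forall a x y, f (vadd (vscale a x) y) = vadd (vscale a (f x)) (f y)),
      (forall q x, f (lmulv q x) = lmulv q (f x)) &
      (forall x y, ip (f x) (f y) = ip x y)].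

Definition span2 (a b : hvec n) : hvec n -> Prop :=
  fun y => exists s t, y = vadd (vscale s a) (vscale t b).

Definition is_2plane (W : hvec n -> Prop) : Prop :=
  exists a b, (forall s t, vadd (vscale s a) (vscale t b) = (fun _ => Quat 0 0 0 0)
                           -> s = 0 /\ t = 0)
              /\ (forall y, W y <-> span2 a b y).

Definition onb (W : hvec n -> Prop) (x v : hvec n) : Prop :=
  [/\ ip x x = 1, ip v v = 1, ip x v = 0 & (forall y, W y <-> span2 x v y)].

(* W1, W2 lie in the same Sp(n).Sp(1)-orbit: W2 = g(W1) with
   g(z) = q f(z), f in Sp(n), q a unit quaternion. *)
Definition same_orbit (W1 W2 : hvec n -> Prop) : Prop :=
  exists f q, [/\ is_Sp f, qnorm2 q = 1 &
     (forall y, W2 y <-> exists z, W1 z /\ lmulv q (f z) = y)].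

End Quaternions.

(* Main.v *)
Require Import Defs.
From mathcomp Require Import all_boot all_order all_algebra ring lra.
From Stdlib Require Import FunctionalExtensionality.
Set Implicit Arguments. Unset Strict Implicit. Unset Printing Implicit Defensive.
Import Order.TTheory GRing.Theory Num.Theory.
Local Open Scope ring_scope.

Section S.
Variable R : rcfType.
Variable n : nat.
Implicit Types p q : quat R.
Implicit Types x y z : hvec R n.

Lemma quatP p q : qre p = qre q -> qim p = qim q -> qjm p = qjm q -> qkm p = qkm q -> p = q.
Proof. by case: p; case: q => /= ???? ???? -> -> -> ->. Qed.

Ltac qext := apply: quatP; rewrite /= ?/qmul ?/qadd ?/qscal /=; ring.

Definition q0 : quat R := Quat 0 0 0 0.
Definition qconj q := Quat (qre q) (- qim q) (- qjm q) (- qkm q).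
Definition hq x y : quat R :=
  Quat (\sum_(i < n) qre (qmul (x i) (qconj (y i))))
       (\sum_(i < n) qim (qmul (x i) (qconj (y i))))
       (\sum_(i < n) qjm (qmul (x i) (qconj (y i))))
       (\sum_(i < n) qkm (qmul (x i) (qconj (y i)))).
Definition zv : hvec R n := fun _ => q0.

Ltac sumnorm := rewrite ?mulr_sumr ?mulr_suml; repeat (rewrite -?sumrB -?big_split -?sumrN /=); apply: eq_bigr => i _.
Ltac hqext := apply: quatP; rewrite /= ?/lmulv ?/vadd ?/vscale ?/vsub; sumnorm; rewrite /=; ring.

Lemma vext x y : (forall i, x i = y i) -> x = y.
Proof. exact: functional_extensionality. Qed.

Lemma qmulA p q r : qmul p (qmul q r) = qmul (qmul p q) r. Proof. qext. Qed.
Lemma qnorm2_mul p q : qnorm2 (qmul p q) = qnorm2 p * qnorm2 q.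
Proof. rewrite /qnorm2 /qdot /=; ring. Qed.
Lemma qnorm2_ge0 p : 0 <= qnorm2 p.
Proof. rewrite /qnorm2 /qdot; rewrite !addr_ge0 ?sqr_ge0 //. Qed.
Lemma qnorm2_eq0 p : qnorm2 p = 0 -> p = q0.
Proof.
case: p => a b c d; rewrite /qnorm2 /qdot /= => H.
have ha : a * a = 0 by apply/eqP; rewrite eq_le; apply/andP; split; [nra| rewrite -expr2 sqr_ge0].
have hb : b * b = 0 by apply/eqP; rewrite eq_le; apply/andP; split; [nra| rewrite -expr2 sqr_ge0].
have hc : c * c = 0 by apply/eqP; rewrite eq_le; apply/andP; split; [nra| rewrite -expr2 sqr_ge0].
have hd : d * d = 0 by apply/eqP; rewrite eq_le; apply/andP; split; [nra| rewrite -expr2 sqr_ge0].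
move: ha hb hc hd => /eqP; rewrite mulf_eq0 orbb => /eqP ->.
move/eqP; rewrite mulf_eq0 orbb => /eqP ->.
move/eqP; rewrite mulf_eq0 orbb => /eqP ->.
move/eqP; rewrite mulf_eq0 orbb => /eqP -> //.
Qed.

Lemma ip_hq x y : ip x y = qre (hq x y).
Proof. rewrite /ip /=; apply: eq_bigr => i _; rewrite /qdot /=; ring. Qed.
Lemma hq_lmul q x y : hq (lmulv q x) y = qmul q (hq x y). Proof. hqext. Qed.
Lemma hq_lmulr q x y : hq x (lmulv q y) = qmul (hq x y) (qconj q). Proof. hqext. Qed.
Lemma hq_addl x y z : hq (vadd x y) z = qadd (hq x z) (hq y z). Proof. hqext. Qed.
Lemma hq_addr x y z : hq z (vadd x y) = qadd (hq z x) (hq z y). Proof. hqext. Qed.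
Lemma hq_scall a x y : hq (vscale a x) y = qscal a (hq x y). Proof. hqext. Qed.
Lemma hq_scalr a x y : hq x (vscale a y) = qscal a (hq x y). Proof. hqext. Qed.
Lemma hq_conj x y : hq y x = qconj (hq x y). Proof. rewrite /qconj; hqext. Qed.
Lemma hq_self x : hq x x = Quat (ip x x) 0 0 0.
Proof.
apply: quatP; rewrite /=.
  by rewrite /ip; apply: eq_bigr => i _; rewrite /qdot /=; ring.
all: rewrite big1 // => i _; rewrite /=; ring.
Qed.
Lemma ip_lmul v e x : ip v (lmulv e x) = qdot (hq v x) e.
Proof. rewrite /ip /qdot /=; sumnorm; rewrite /lmulv /qdot /=; ring. Qed.
Lemma ip_sym x y : ip x y = ip y x.
Proof. by rewrite !ip_hq hq_conj. Qed.
Lemma ip_ge0 x : 0 <= ip x x.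
Proof. by rewrite /ip sumr_ge0 // => i _; apply: qnorm2_ge0. Qed.
Lemma ip_eq0 x : ip x x = 0 -> x = zv.
Proof.
move=> /eqP; rewrite /ip psumr_eq0 => [/allP H|i _]; last exact: qnorm2_ge0.
apply: vext => i; apply: qnorm2_eq0; apply/eqP; apply: H; exact: mem_index_enum.
Qed.

Lemma vscale1 x : vscale 1 x = x.
Proof. apply: vext => i; qext. Qed.
Lemma vadd0 x : vadd x zv = x.
Proof. apply: vext => i; rewrite /vadd /zv /q0; qext. Qed.

Lemma piperp_eq x v : piperp x v = vsub v (lmulv (qscal (1 / ip x x) (hq v x)) x).
Proof.
rewrite /piperp !ip_lmul; apply: vext => i.
rewrite /vsub /vadd /vscale /lmulv /qdot /q1 /qi /qj /qk /=; qext.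
Qed.

Lemma inv2_eq x v : ip x x = 1 -> inv2 x v = ip v v - qnorm2 (hq v x).
Proof.
move=> Hx; rewrite /inv2 piperp_eq Hx divr1 ip_hq /vsub.
rewrite !(hq_addl, hq_addr, hq_scall, hq_scalr, hq_lmul, hq_lmulr).
rewrite (hq_conj x v) (hq_self x) (ip_hq v v) Hx.
move: (hq v x) => h; rewrite /qnorm2 /qdot /=; ring.
Qed.

Section Sp.
Variable f : hvec R n -> hvec R n.
Hypothesis hf : is_Sp f.

Lemma Sp_lin a x y : f (vadd (vscale a x) y) = vadd (vscale a (f x)) (f y).
Proof. by case: hf. Qed.
Lemma Sp_lmul q x : f (lmulv q x) = lmulv q (f x).
Proof. by case: hf. Qed.
Lemma Sp_ip x y : ip (f x) (f y) = ip x y.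
Proof. by case: hf. Qed.
Lemma Sp_zero : f zv = zv.
Proof.
have -> : zv = vadd (vscale (-1) zv) zv by apply: vext => i; rewrite /zv /q0; qext.
rewrite Sp_lin; apply: vext => i; rewrite /vadd /vscale /=; qext.
Qed.
Lemma Sp_scal a x : f (vscale a x) = vscale a (f x).
Proof. by rewrite -[vscale a x]vadd0 Sp_lin Sp_zero vadd0. Qed.
Lemma Sp_add x y : f (vadd x y) = vadd (f x) (f y).
Proof. by rewrite -{1}[x]vscale1 Sp_lin vscale1. Qed.
Lemma Sp_hq x y : hq (f x) (f y) = hq x y.
Proof.
have E : forall e, qdot (hq (f x) (f y)) e = qdot (hq x y) e.
  by move=> e; rewrite -!ip_lmul -Sp_lmul Sp_ip.
move: (E (q1 R)) (E (qi R)) (E (qj R)) (E (qk R)).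
move: (hq (f x) (f y)) (hq x y) => [a b c d] [a' b' c' d'].
rewrite /qdot /q1 /qi /qj /qk /= !(mulr0,mulr1,addr0,add0r) => -> -> -> -> //.
Qed.
End Sp.

Lemma Sp_comp f g : is_Sp f -> is_Sp g -> is_Sp (fun z => f (g z)).
Proof.
move=> hf hg; rewrite /is_Sp; split.
- by move=> a x y; rewrite (Sp_lin hg) (Sp_lin hf).
- by move=> q x; rewrite (Sp_lmul hg) (Sp_lmul hf).
- by move=> x y; rewrite (Sp_ip hf) (Sp_ip hg).
Qed.

Lemma hq_lmul2 q x y : hq (lmulv q x) (lmulv q y) = qmul (qmul q (hq x y)) (qconj q).
Proof. by rewrite hq_lmul hq_lmulr qmulA. Qed.

Lemma qnorm2_conjmul q h : qnorm2 q = 1 -> qnorm2 (qmul (qmul q h) (qconj q)) = qnorm2 h.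
Proof.
move=> Hq; rewrite !qnorm2_mul Hq mul1r.
have -> : qnorm2 (qconj q) = qnorm2 q by rewrite /qnorm2 /qdot /=; ring.
by rewrite Hq mulr1.
Qed.

Lemma span_self1 x v : span2 x v x.
Proof. exists 1, 0; apply: vext => i; rewrite /vadd /vscale; qext. Qed.
Lemma span_self2 x v : span2 x v v.
Proof. exists 0, 1; apply: vext => i; rewrite /vadd /vscale; qext. Qed.

Lemma hq_comb a b c d x v :
  hq (vadd (vscale c x) (vscale d v)) (vadd (vscale a x) (vscale b v)) =
  qadd (qadd (qscal (c * a) (hq x x)) (qscal (c * b) (hq x v)))
       (qadd (qscal (d * a) (hq v x)) (qscal (d * b) (hq v v))).
Proof.
rewrite !(hq_addl, hq_addr, hq_scall, hq_scalr); apply: quatP => /=; ring.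
Qed.

Lemma part1 W x v x' v' : onb W x v -> onb W x' v' -> inv2 x v = inv2 x' v'.
Proof.
case=> Hxx Hvv Hxv HW [Hxx' Hvv' Hxv' HW'].
have /HW [a [b Ex]] : W x' by apply/HW'; apply: span_self1.
have /HW [c [d Ev]] : W v' by apply/HW'; apply: span_self2.
rewrite (inv2_eq _ Hxx) (inv2_eq _ Hxx') Hvv Hvv'.
move: Hxx' Hvv' Hxv'; rewrite Ex Ev !ip_hq !hq_comb (hq_conj v x) !hq_self Hxx Hvv.
have : qre (hq v x) = 0 by rewrite -ip_hq ip_sym.
move: (hq v x) => [h0 h1 h2 h3] /= -> E1 E2 E3.
have key : (a * d - b * c) ^+ 2 = 1.
  have -> : (a * d - b * c) ^+ 2 = (a*a+b*b)*(c*c+d*d) - (a*c+b*d)^+2 by ring.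
  have -> : a*c+b*d = 0 by move: E3; rewrite /=; lra.
  have -> : a*a+b*b = 1 by move: E1; rewrite /=; lra.
  have -> : c*c+d*d = 1 by move: E2; rewrite /=; lra.
  by rewrite expr0n /= mulr1 subr0.
have H0 : a*c+b*d = 0 by move: E3; rewrite /=; lra.
congr (1 - _); rewrite /qnorm2 /qdot /=.
transitivity ((a * d - b * c) ^+ 2 * (0*0+h1*h1+h2*h2+h3*h3) + (a*c+b*d)^+2 ).
  by rewrite key H0 expr0n /= mul1r addr0.
ring.
Qed.

Lemma lmulv_comb q s t (a b : hvec R n) :
  lmulv q (vadd (vscale s a) (vscale t b)) = vadd (vscale s (lmulv q a)) (vscale t (lmulv q b)).
Proof. apply: vext => i; rewrite /lmulv /vadd /vscale; qext. Qed.

Lemma Sp_comb f s t (a b : hvec R n) : is_Sp f ->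
  f (vadd (vscale s a) (vscale t b)) = vadd (vscale s (f a)) (vscale t (f b)).
Proof. by move=> hf; rewrite (Sp_add hf) !(Sp_scal hf). Qed.

Lemma qre_conjmul q h : qre (qmul (qmul q h) (qconj q)) = qnorm2 q * qre h.
Proof. rewrite /qnorm2 /qdot /=; ring. Qed.

Lemma orbit_onb W1 W2 f q x v : is_Sp f -> qnorm2 q = 1 ->
  (forall y, W2 y <-> exists z, W1 z /\ lmulv q (f z) = y) ->
  onb W1 x v -> onb W2 (lmulv q (f x)) (lmulv q (f v)).
Proof.
move=> hf Hq HW2 [Hxx Hvv Hxv HW1].
have Eip : forall a b, ip (lmulv q (f a)) (lmulv q (f b)) = ip a b.
  move=> a b; rewrite !ip_hq hq_lmul2 (Sp_hq hf).
  by rewrite qre_conjmul Hq mul1r.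
split; rewrite ?Eip //.
move=> y; split.
- move/HW2 => [z [/HW1 [s [t ->]] <-]]; exists s, t.
  by rewrite (Sp_comb _ _ _ _ hf) lmulv_comb.
- move=> [s [t ->]]; apply/HW2; exists (vadd (vscale s x) (vscale t v)); split.
    by apply/HW1; exists s, t.
  by rewrite (Sp_comb _ _ _ _ hf) lmulv_comb.
Qed.

Lemma orbit_inv W1 W2 x1 v1 x2 v2 :
  onb W1 x1 v1 -> onb W2 x2 v2 -> same_orbit W1 W2 -> inv2 x1 v1 = inv2 x2 v2.
Proof.
move=> O1 O2 [f [q [hf Hq HW2]]].
have O3 := orbit_onb hf Hq HW2 O1.
rewrite (part1 O2 O3).
case: O1 => Hxx Hvv _ _; case: (O3) => Hxx' Hvv' _ _.
rewrite (inv2_eq _ Hxx) (inv2_eq _ Hxx') Hvv Hvv'.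
by rewrite hq_lmul2 (Sp_hq hf) qnorm2_conjmul.
Qed.

Definition ek (k : 'I_n) : hvec R n := fun i => if i == k then q1 R else q0.
Lemma hq_ek z k : hq z (ek k) = z k.
Proof.
apply: quatP => /=; rewrite (bigD1 k) //= big1 ?addr0 /ek ?eqxx /=;
  try (move=> i /negbTE ->); rewrite /= /q0 /q1 /=; ring.
Qed.

Definition refl (w z : hvec R n) : hvec R n :=
  vsub z (lmulv (qscal (2 / ip w w) (hq z w)) w).

Lemma sub_trick (a b c : R) : c = 0 -> a - b = c -> a = b.
Proof. by move=> -> /eqP; rewrite subr_eq0 => /eqP. Qed.

Lemma kN_eq (N : R) : (2 / N) * (N * (2 / N) - 2) = 0.
Proof.
case: (eqVneq N 0) => [->|HN]; first by rewrite invr0 !mulr0 mul0r.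
have -> : N * (2 / N) = 2 by field.
by rewrite subrr mulr0.
Qed.

Lemma refl_Sp w : is_Sp (refl w).
Proof.
split.
- move=> a x y; rewrite /refl hq_addl hq_scall; apply: vext => i.
  rewrite /vsub /vadd /vscale /lmulv; qext.
- move=> q x; rewrite /refl hq_lmul; apply: vext => i.
  rewrite /vsub /vadd /vscale /lmulv; qext.
- move=> x y; rewrite !ip_hq /refl /vsub.
  rewrite !(hq_addl, hq_addr, hq_scall, hq_scalr, hq_lmul, hq_lmulr) (hq_conj y w) hq_self.
  move: (kN_eq (ip w w)); move: (2 / ip w w) => k; move: (ip w w) => N Hk.
  move: (hq x w) (hq y w) (hq x y) => [a0 a1 a2 a3] [b0 b1 b2 b3] [c0 c1 c2 c3] /=.
  apply: (sub_trick (c := k * (N * k - 2) * (a0*b0+a1*b1+a2*b2+a3*b3))).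
    by rewrite Hk mul0r.
  ring.
Qed.

Lemma refl_fix w z : hq z w = q0 -> refl w z = z.
Proof. move=> H; rewrite /refl H; apply: vext => i; rewrite /vsub /vadd /vscale /lmulv /q0; qext. Qed.

Lemma refl_inv w z : refl w (refl w z) = z.
Proof.
have Hr : hq (refl w z) w = qscal (1 - (2 / ip w w) * ip w w) (hq z w).
  rewrite /refl /vsub !(hq_addl, hq_scall, hq_lmul) hq_self.
  apply: quatP => /=; ring.
rewrite {1}/refl Hr.
have -> : vsub (refl w z) (lmulv (qscal (2 / ip w w) (qscal (1 - 2/ip w w * ip w w) (hq z w))) w)
   = vsub z (lmulv (qscal ((2 / ip w w) * (2 - ip w w * (2 / ip w w))) (hq z w)) w).
  apply: vext => i; rewrite /refl /vsub /vadd /vscale /lmulv; qext.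
have -> : (2 / ip w w) * (2 - ip w w * (2 / ip w w)) = 0.
  by rewrite -[RHS]oppr0 -(kN_eq (ip w w)); ring.
apply: vext => i; rewrite /vsub /vadd /vscale /lmulv; qext.
Qed.

Lemma refl_map a b : ip a a = ip b b ->
  qim (hq a b) = 0 -> qjm (hq a b) = 0 -> qkm (hq a b) = 0 ->
  refl (vsub a b) a = b.
Proof.
move=> Hab H1 H2 H3.
have Hw : hq a (vsub a b) = Quat (ip a a - qre (hq a b)) 0 0 0.
  rewrite /vsub hq_addr hq_scalr hq_self; move: (hq a b) H1 H2 H3 => [h0 h1 h2 h3] /= -> -> ->; apply: quatP => /=; ring.
have HN : ip (vsub a b) (vsub a b) = 2 * (ip a a - qre (hq a b)).
  rewrite ip_hq /vsub !(hq_addl, hq_addr, hq_scall, hq_scalr) (hq_conj a b) !hq_self Hab /=; ring.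
have E : refl (vsub a b) a =
   vsub a (vscale (2 / ip (vsub a b) (vsub a b) * (ip a a - qre (hq a b))) (vsub a b)).
  rewrite /refl Hw; apply: vext => i; rewrite /vsub /vadd /vscale /lmulv; qext.
case: (eqVneq (ip (vsub a b) (vsub a b)) 0) => [/ip_eq0 H0|HN0].
  have Eab : forall i, b i = a i.
    move=> i; move: (congr1 (fun f => f i) H0); rewrite /vsub /vadd /vscale /zv /q0 => /= Hi.
    apply: quatP; move: Hi; case: (a i) => ????; case: (b i) => ???? [] /=; lra.
  rewrite E H0; apply: vext => i; rewrite Eab /vsub /vadd /vscale /zv /q0; qext.
rewrite E.
have -> : 2 / ip (vsub a b) (vsub a b) * (ip a a - qre (hq a b)) = 1.
  move: HN0; rewrite HN => HN0.
  have HN1 : ip a a - qre (hq a b) != 0 by apply: contra HN0 => /eqP ->; rewrite mulr0.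
  by field.
apply: vext => i; rewrite /vsub /vadd /vscale; qext.
Qed.

Definition Dg (r : 'I_n -> quat R) (z : hvec R n) : hvec R n := fun i => qmul (z i) (r i).

Lemma Dg_Sp r : (forall i, qnorm2 (r i) = 1) -> is_Sp (Dg r).
Proof.
move=> Hr; split.
- move=> a x y; apply: vext => i; rewrite /Dg /vadd /vscale; qext.
- move=> q x; apply: vext => i; rewrite /Dg /lmulv; qext.
- move=> x y; rewrite /ip /Dg; apply: eq_bigr => i _.
  move: (Hr i); rewrite /qnorm2 /qdot /=; move: (r i) (x i) (y i) => [r0 r1 r2 r3] [a0 a1 a2 a3] [b0 b1 b2 b3] /= H.
  apply: (sub_trick (c := (r0*r0+r1*r1+r2*r2+r3*r3 - 1) * (a0*b0+a1*b1+a2*b2+a3*b3))).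
    by rewrite H subrr mul0r.
  ring.
Qed.

Lemma Dg_inv r z : (forall i, qnorm2 (r i) = 1) -> Dg (fun i => qconj (r i)) (Dg r z) = z.
Proof.
move=> Hr; apply: vext => i; rewrite /Dg; move: (Hr i); rewrite /qnorm2 /qdot.
case: (r i) => r0 r1 r2 r3; case: (z i) => a0 a1 a2 a3 /= H.
apply: quatP => /=.
- apply: (sub_trick (c := (r0*r0+r1*r1+r2*r2+r3*r3 - 1) * a0)); [by rewrite H subrr mul0r| ring].
- apply: (sub_trick (c := (r0*r0+r1*r1+r2*r2+r3*r3 - 1) * a1)); [by rewrite H subrr mul0r| ring].
- apply: (sub_trick (c := (r0*r0+r1*r1+r2*r2+r3*r3 - 1) * a2)); [by rewrite H subrr mul0r| ring].
- apply: (sub_trick (c := (r0*r0+r1*r1+r2*r2+r3*r3 - 1) * a3)); [by rewrite H subrr mul0r| ring].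
Qed.

Definition unitz (p : quat R) : quat R :=
  if qnorm2 p == 0 then q1 R else qscal (1 / Num.sqrt (qnorm2 p)) (qconj p).

Lemma unitz_norm p : qnorm2 (unitz p) = 1.
Proof.
rewrite /unitz; case: eqP => [_|H]; first by rewrite /qnorm2 /qdot /=; ring.
have Hs : Num.sqrt (qnorm2 p) ^+ 2 = qnorm2 p by rewrite sqr_sqrtr // qnorm2_ge0.
have Hs0 : Num.sqrt (qnorm2 p) != 0.
  by apply/eqP => H0; apply: H; rewrite -Hs H0 expr0n.
transitivity (qnorm2 p / Num.sqrt (qnorm2 p) ^+ 2); last by rewrite Hs divff //; apply/eqP.
move: Hs0; move: (Num.sqrt (qnorm2 p)) => s Hs0.
rewrite /qnorm2 /qdot /=; by field.
Qed.

Lemma unitz_mul p : qmul p (unitz p) = Quat (Num.sqrt (qnorm2 p)) 0 0 0.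
Proof.
rewrite /unitz; case: eqP => [H|H].
  rewrite H sqrtr0 (qnorm2_eq0 H) /q0; apply: quatP => /=; ring.
have Hs : Num.sqrt (qnorm2 p) ^+ 2 = qnorm2 p by rewrite sqr_sqrtr // qnorm2_ge0.
have Hs0 : Num.sqrt (qnorm2 p) != 0.
  by apply/eqP => H0; apply: H; rewrite -Hs H0 expr0n.
move: Hs Hs0; move: (Num.sqrt (qnorm2 p)) => s Hs Hs0.
apply: quatP => /=; try (by field).
transitivity (qnorm2 p / s); first by rewrite /qnorm2 /qdot; field.
by rewrite -Hs; field.
Qed.

Lemma ip_ek k : ip (ek k) (ek k) = 1.
Proof. by rewrite ip_hq hq_ek /ek eqxx. Qed.

Lemma hq_eq0_qre h : h = q0 -> qim h = 0 /\ qjm h = 0 /\ qkm h = 0.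
Proof. by move=> ->. Qed.

Lemma Dg_ek r k : r k = q1 R -> Dg r (ek k) = ek k.
Proof.
move=> Hk; apply: vext => i; rewrite /Dg /ek.
case: eqP => [->|_]; rewrite ?Hk /q1 /q0; qext.
Qed.

Lemma r_norm k p : qnorm2 p = 1 -> forall i : 'I_n, qnorm2 (if i == k then p else q1 R) = 1.
Proof. move=> Hp i; case: (i == k) => //; rewrite /qnorm2 /qdot /=; ring. Qed.

Lemma transT (i0 i1 : 'I_n) (Hi : i0 != i1) x y :
  ip x x = 1 -> hq y x = q0 ->
  exists F Fi, [/\ is_Sp F, is_Sp Fi, (forall z, Fi (F z) = z), F x = ek i0 &
                  F y = vscale (Num.sqrt (ip y y)) (ek i1)].
Proof.
move=> Hx Hyx.
pose r1 := fun i : 'I_n => if i == i0 then unitz (x i0) else q1 R.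
have Hr1 : forall i, qnorm2 (r1 i) = 1 by apply: r_norm; apply: unitz_norm.
pose x' := Dg r1 x.
have Hx'0 : x' i0 = Quat (Num.sqrt (qnorm2 (x i0))) 0 0 0 by rewrite /x' /Dg /r1 eqxx unitz_mul.
have Hx' : ip x' x' = 1 by rewrite /x' (Sp_ip (Dg_Sp Hr1)).
pose H1 := refl (vsub x' (ek i0)).
have H1x : H1 x' = ek i0.
  apply: refl_map; rewrite ?Hx' ?ip_ek ?hq_ek ?Hx'0 //.
pose y3 := H1 (Dg r1 y).
have Hy30 : y3 i0 = q0.
  rewrite -hq_ek -H1x /y3 (Sp_hq (refl_Sp _)) /x' (Sp_hq (Dg_Sp Hr1)) Hyx //.
pose r2 := fun i : 'I_n => if i == i1 then unitz (y3 i1) else q1 R.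
have Hr2 : forall i, qnorm2 (r2 i) = 1 by apply: r_norm; apply: unitz_norm.
pose y4 := Dg r2 y3.
have Hy40 : y4 i0 = q0 by rewrite /y4 /Dg Hy30 /r2 (negbTE Hi) /q0; qext.
have Hy41 : y4 i1 = Quat (Num.sqrt (qnorm2 (y3 i1))) 0 0 0 by rewrite /y4 /Dg /r2 eqxx unitz_mul.
have Hy4 : ip y4 y4 = ip y y.
  by rewrite /y4 (Sp_ip (Dg_Sp Hr2)) /y3 (Sp_ip (refl_Sp _)) (Sp_ip (Dg_Sp Hr1)).
pose b := Num.sqrt (ip y y).
pose H2 := refl (vsub y4 (vscale b (ek i1))).
have H2y : H2 y4 = vscale b (ek i1).
  apply: refl_map; rewrite ?hq_scalr ?hq_ek ?Hy41 //=; try ring.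
  rewrite Hy4 [ip (vscale _ _) _]ip_hq hq_scall hq_scalr hq_ek /ek eqxx /= /b.
  by rewrite mulr1 -expr2 sqr_sqrtr // ip_ge0.
have H2e : H2 (ek i0) = ek i0.
  apply: refl_fix; rewrite /vsub hq_addr hq_scalr hq_scalr (hq_conj y4 (ek i0)) hq_ek Hy40 hq_ek.
  rewrite /ek eq_sym (negbTE Hi) /q0; apply: quatP => /=; ring.
exists (fun z => H2 (Dg r2 (H1 (Dg r1 z)))),
       (fun z => Dg (fun i => qconj (r1 i)) (H1 (Dg (fun i => qconj (r2 i)) (H2 z)))).
have Hr1c : forall i, qnorm2 (qconj (r1 i)) = 1.
  by move=> i; rewrite -(Hr1 i) /qnorm2 /qdot /=; ring.
have Hr2c : forall i, qnorm2 (qconj (r2 i)) = 1.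
  by move=> i; rewrite -(Hr2 i) /qnorm2 /qdot /=; ring.
split.
- apply: Sp_comp; first exact: refl_Sp.
  apply: Sp_comp; first exact: Dg_Sp.
  apply: Sp_comp; [exact: refl_Sp| exact: Dg_Sp].
- apply: Sp_comp; first exact: Dg_Sp.
  apply: Sp_comp; first exact: refl_Sp.
  apply: Sp_comp; [exact: Dg_Sp| exact: refl_Sp].
- by move=> z; rewrite /H2 /H1 refl_inv Dg_inv // refl_inv Dg_inv.
- rewrite -/x' H1x Dg_ek // /r2 (negbTE Hi).
  by [].
- by rewrite -/y3 -/y4 H2y.
Qed.

Lemma normalize p u1 u2 : qnorm2 p != 0 -> qmul p u1 = qmul u2 p ->
  exists q, qnorm2 q = 1 /\ qmul q u1 = qmul u2 q.
Proof.
move=> /eqP Hp E; exists (qconj (unitz p)); split.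
  by rewrite -(unitz_norm p) /qnorm2 /qdot /=; ring.
rewrite /unitz; case: eqP => // _.
move: (1 / Num.sqrt (qnorm2 p)) => c.
have E' : forall r, qmul (qconj (qscal c (qconj r))) u1 = qscal c (qmul r u1).
  by move=> r; qext.
have E'' : forall r, qmul u2 (qconj (qscal c (qconj r))) = qscal c (qmul u2 r).
  by move=> r; qext.
by rewrite E' E'' E.
Qed.

Definition p0f (u1 u2 : quat R) := qadd (Quat (qnorm2 u1) 0 0 0) (qscal (-1) (qmul u2 u1)).

Lemma Ep0 u1 u2 : qre u1 = 0 -> qre u2 = 0 -> qnorm2 u1 = qnorm2 u2 ->
  qmul (p0f u1 u2) u1 = qmul u2 (p0f u1 u2).
Proof.
  rewrite /p0f /qnorm2 /qdot.
  case: u1 => a0 a1 a2 a3 /= ->; case: u2 => b0 b1 b2 b3 /= -> Hn.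
  apply: quatP => /=.
  - ring.
  - apply: (sub_trick (c := (0*0+a1*a1+a2*a2+a3*a3 - (0*0+b1*b1+b2*b2+b3*b3)) * a1)); last ring.
    by rewrite Hn subrr mul0r.
  - apply: (sub_trick (c := (0*0+a1*a1+a2*a2+a3*a3 - (0*0+b1*b1+b2*b2+b3*b3)) * a2)); last ring.
    by rewrite Hn subrr mul0r.
  - apply: (sub_trick (c := (0*0+a1*a1+a2*a2+a3*a3 - (0*0+b1*b1+b2*b2+b3*b3)) * a3)); last ring.
    by rewrite Hn subrr mul0r.
Qed.

Lemma Eab u1 u2 : qre u1 = 0 -> qre u2 = 0 -> qnorm2 u1 = qnorm2 u2 ->
  qnorm2 (p0f u1 u2) = 0 -> u2 = qscal (-1) u1.
Proof.
move=> H1 H2 Hn /qnorm2_eq0 /(congr1 (@qre R)).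
have : qnorm2 (qadd u1 u2) = 2 * qre (p0f u1 u2) - (qnorm2 u1 - qnorm2 u2).
  rewrite /p0f /qnorm2 /qdot.
  case: (u1) H1 => a0 a1 a2 a3 /= ->; case: (u2) H2 => b0 b1 b2 b3 /= ->.
  ring.
rewrite Hn subrr subr0 => E E0; move: E; rewrite E0 /q0 /= mulr0 => /qnorm2_eq0.
clear H1 H2 Hn E0; case: u1 => a0 a1 a2 a3; case: u2 => b0 b1 b2 b3 /= [] ????.
apply: quatP => /=; lra.
Qed.

Lemma conjC u1 u2 : qre u1 = 0 -> qre u2 = 0 -> qnorm2 u1 = qnorm2 u2 ->
  exists q, qnorm2 q = 1 /\ qmul q u1 = qmul u2 q.
Proof.
move=> H1 H2 Hn.
case: (eqVneq (qnorm2 (p0f u1 u2)) 0) => [Hp0|Hp0]; last exact: normalize Hp0 (Ep0 H1 H2 Hn).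
have Eb := Eab H1 H2 Hn Hp0.
pose p := if (qim u1 == 0) && (qjm u1 == 0) then qi R else Quat 0 (qjm u1) (- qim u1) 0.
apply: (@normalize p).
  rewrite /p; case: ifP => [_|Hne]; first by rewrite /qnorm2 /qdot /=; rewrite !mul0r mul1r !add0r !addr0 oner_neq0.
  apply/eqP => /qnorm2_eq0 [] /eqP H3 /eqP; rewrite oppr_eq0 => H4.
  by move: Hne; rewrite H3 H4.
rewrite Eb /p; case: ifP => [/andP [/eqP Ha1 /eqP Ha2]|_].
  apply: quatP => /=; rewrite H1 Ha1 Ha2; ring.
apply: quatP => /=; rewrite H1; ring.
Qed.

Lemma qmul1l p : qmul (q1 R) p = p. Proof. qext. Qed.
Lemma qmul1r p : qmul p (q1 R) = p. Proof. qext. Qed.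
Lemma qconj_mulr q : qnorm2 q = 1 -> qmul q (qconj q) = q1 R.
Proof. move=> H; apply: quatP; move: H; rewrite /qnorm2 /qdot /= => H; rewrite -?H; ring. Qed.
Lemma qconj_mull q : qnorm2 q = 1 -> qmul (qconj q) q = q1 R.
Proof. move=> H; apply: quatP; move: H; rewrite /qnorm2 /qdot /= => H; rewrite -?H; ring. Qed.

Lemma swap_conj q u1 u2 : qnorm2 q = 1 -> qmul q u1 = qmul u2 q ->
  qmul u1 (qconj q) = qmul (qconj q) u2.
Proof.
move=> Hq E.
transitivity (qmul (qmul (qmul (qconj q) q) u1) (qconj q)); first by rewrite qconj_mull // qmul1l.
transitivity (qmul (qconj q) (qmul (qmul q u1) (qconj q))); first by qext.
rewrite E; transitivity (qmul (qconj q) (qmul u2 (qmul q (qconj q)))); first by qext.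
by rewrite qconj_mulr // qmul1r.
Qed.

Lemma lmulv_lmulv p q z : lmulv p (lmulv q z) = lmulv (qmul p q) z.
Proof. apply: vext => i; rewrite /lmulv; qext. Qed.
Lemma lmulv_add c (a b : hvec R n) : lmulv c (vadd a b) = vadd (lmulv c a) (lmulv c b).
Proof. apply: vext => i; rewrite /lmulv /vadd; qext. Qed.
Lemma lmulv_scal c s (a : hvec R n) : lmulv c (vscale s a) = vscale s (lmulv c a).
Proof. apply: vext => i; rewrite /lmulv /vscale; qext. Qed.
Lemma lmulv1 z : lmulv (q1 R) z = z.
Proof. apply: vext => i; rewrite /lmulv; qext. Qed.
Lemma Dg_ekc c k : Dg (fun _ => c) (ek k) = lmulv c (ek k).
Proof. apply: vext => i; rewrite /Dg /lmulv /ek; case: (i == k); rewrite /q1 /q0; qext. Qed.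

Lemma qscal1 p : qscal 1 p = p. Proof. qext. Qed.

Lemma decomp x v : ip x x = 1 -> ip v v = 1 -> ip x v = 0 ->
  [/\ qre (hq v x) = 0, hq (vsub v (lmulv (hq v x) x)) x = q0,
      ip (vsub v (lmulv (hq v x) x)) (vsub v (lmulv (hq v x) x)) = inv2 x v,
      qnorm2 (hq v x) = 1 - inv2 x v &
      v = vadd (lmulv (hq v x) x) (vsub v (lmulv (hq v x) x))].
Proof.
move=> Hxx Hvv Hxv; split.
- by rewrite -ip_hq ip_sym.
- rewrite /vsub hq_addl hq_scall hq_lmul hq_self Hxx.
  move: (hq v x) => h; rewrite /q0; qext.
- by rewrite /inv2 piperp_eq Hxx divr1 qscal1.
- by rewrite (inv2_eq _ Hxx) Hvv; ring.
- apply: vext => i; rewrite /vadd /vsub /vscale /lmulv; qext.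
Qed.

Lemma inv_orbit (i0 i1 : 'I_n) (Hi : i0 != i1) W1 W2 x1 v1 x2 v2 :
  onb W1 x1 v1 -> onb W2 x2 v2 -> inv2 x1 v1 = inv2 x2 v2 -> same_orbit W1 W2.
Proof.
move=> [Hxx1 Hvv1 Hxv1 HW1] [Hxx2 Hvv2 Hxv2 HW2] Heq.
case: (decomp Hxx1 Hvv1 Hxv1) => Hu1 Hy1 Hyy1 Hn1 Ev1.
case: (decomp Hxx2 Hvv2 Hxv2) => Hu2 Hy2 Hyy2 Hn2 Ev2.
move: Hy1 Hyy1 Hn1 Ev1 Hu1; move: (hq v1 x1) => u1; move: (vsub v1 (lmulv u1 x1)) => y1.
move=> Hy1 Hyy1 Hn1 Ev1 Hu1.
move: Hy2 Hyy2 Hn2 Ev2 Hu2; move: (hq v2 x2) => u2; move: (vsub v2 (lmulv u2 x2)) => y2.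
move=> Hy2 Hyy2 Hn2 Ev2 Hu2.
have [q [Hq Equ]] : exists q, qnorm2 q = 1 /\ qmul q u1 = qmul u2 q.
  by apply: conjC => //; rewrite Hn1 Hn2 Heq.
have [F1 [Fi1 [SF1 _ _ F1x F1y]]] := transT Hi Hxx1 Hy1.
have [F2 [Fi2 [SF2 SFi2 FiF2 F2x F2y]]] := transT Hi Hxx2 Hy2.
have Hqc : qnorm2 (qconj q) = 1 by rewrite -Hq /qnorm2 /qdot /=; ring.
have SD : is_Sp (Dg (fun _ => qconj q)) by apply: Dg_Sp.
pose f := fun z => Fi2 (Dg (fun _ => qconj q) (F1 z)).
have Sf : is_Sp f by apply: Sp_comp => //; apply: Sp_comp.
have gx : lmulv q (f x1) = x2.
  rewrite /f F1x Dg_ekc (Sp_lmul SFi2) -F2x FiF2 lmulv_lmulv (qconj_mulr Hq) lmulv1 //.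
have gv : lmulv q (f v1) = v2.
  rewrite /f Ev1 (Sp_add SF1) (Sp_lmul SF1) F1x F1y (Sp_add SD) (Sp_lmul SD) (Sp_scal SD).
  rewrite !Dg_ekc lmulv_lmulv (swap_conj Hq Equ) -lmulv_lmulv -lmulv_scal -lmulv_add.
  rewrite Hyy1 Heq -Hyy2 -F2x -F2y -(Sp_lmul SF2) -(Sp_add SF2) -Ev2.
  rewrite (Sp_lmul SFi2) FiF2 lmulv_lmulv (qconj_mulr Hq) lmulv1 //.
exists f, q; split => // y; split.
- move/HW2 => [s [t ->]]; exists (vadd (vscale s x1) (vscale t v1)); split.
    by apply/HW1; exists s, t.
  by rewrite (Sp_comb _ _ _ _ Sf) lmulv_comb gx gv.
- move=> [z [/HW1 [s [t ->]] <-]]; apply/HW2; exists s, t.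
  by rewrite (Sp_comb _ _ _ _ Sf) lmulv_comb gx gv.
Qed.
End S.

Theorem lemma11p8 (R : rcfType) (n : nat) (hn : (3 <= n)%N) :
  (forall (W : hvec R n -> Prop) (x v x' v' : hvec R n),
      is_2plane W -> onb W x v -> onb W x' v' -> inv2 x v = inv2 x' v')
  /\
  (forall (W1 W2 : hvec R n -> Prop) (x1 v1 x2 v2 : hvec R n),
      is_2plane W1 -> is_2plane W2 -> onb W1 x1 v1 -> onb W2 x2 v2 ->
      (same_orbit W1 W2 <-> inv2 x1 v1 = inv2 x2 v2)).
Proof.
have h0 : (0 < n)%N by apply: leq_trans hn.
have h1 : (1 < n)%N by apply: leq_trans hn.
pose i0 : 'I_n := Ordinal h0.
pose i1 : 'I_n := Ordinal h1.
have Hi : i0 != i1 by [].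
split.
  by move=> W x v x' v' _; apply: part1.
move=> W1 W2 x1 v1 x2 v2 _ _ O1 O2; split.
  exact: orbit_inv.
exact: (inv_orbit Hi O1 O2).
Qed.
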